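(* Let $K$ be a field of characteristic different from $2$ and $3$, let $L$ be a perfect Lie algebra, $A$ an associative commutative algebra with unit, with at least one of $L$, $A$ finite-dimensional, $D$ a Lie subalgebra of $\operatorname{Der}(A)$, $\langle\cdot,\cdot\rangle$ a nonzero symmetric bilinear invariant form on $L$, and $\xi$ a nonzero element of $HC^1(A)$. Consider the Lie algebra $(L\otimes A)\oplus Kz\oplus D$ with brackets $[x\otimes a,y\otimes b]=[x,y]\otimes ab+\langle x,y\rangle\xi(a,b)z$, $[d,x\otimes a]=x\otimes d(a)$, the bracket of $D$, and $z$ central ($x,y\in L$, $a,b\in A$, $d\in D$), assuming these brackets define a Lie algebra. Then $Z^2_{comm}((L\otimes A)\oplus Kz\oplus D)\cong Z^2_{comm}((L\otimes A)\oplus D)$, where $(L\otimes A)\oplus D$ carries the brackets $[x\otimes a,y\otimes b]=[x,y]\otimes ab$, $[d,x\otimes a]=x\otimes d(a)$ and the bracket of $D$.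
   Context: $Z^2_{comm}(\mathfrak L)$ is the space of symmetric bilinear forms $\varphi$ on a Lie algebra $\mathfrak L$ with $\varphi([x,y],z)+\varphi([z,x],y)+\varphi([y,z],x)=0$ for all $x,y,z$. $HC^1(A)$ is the space of skew-symmetric bilinear forms $\alpha$ on $A$ with $\alpha(ab,c)+\alpha(ca,b)+\alpha(bc,a)=0$ for all $a,b,c\in A$. A bilinear form $\langle\cdot,\cdot\rangle$ on $L$ is invariant if $\langle[x,y],w\rangle=\langle x,[y,w]\rangle$ for all $x,y,w\in L$. *)

(* Defs.v *)
From HB Require Import structures.
From mathcomp Require Import all_boot all_order all_algebra.
Set Implicit Arguments. Unset Strict Implicit. Unset Printing Implicit Defensive.
Import Order.TTheory GRing.Theory Num.Theory.
Local Open Scope ring_scope.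

Section Defs.
Variable K : fieldType.

Definition lin (V W : lmodType K) (f : V -> W) : Prop :=
  forall (c : K) (u v : V), f (c *: u + v) = c *: f u + f v.
Definition bilin (U V W : lmodType K) (f : U -> V -> W) : Prop :=
  (forall u, lin (f u)) /\ (forall v, lin (fun u => f u v)).
Definition linK (V : lmodType K) (f : V -> K) : Prop :=
  forall (c : K) (u v : V), f (c *: u + v) = c * f u + f v.
Definition bilinK (U V : lmodType K) (f : U -> V -> K) : Prop :=
  (forall u, linK (f u)) /\ (forall v, linK (fun u => f u v)).

Definition fin_dim (V : lmodType K) : Prop :=
  exists s : seq V, forall v : V, exists c : nat -> K,
    v = \sum_(i < size s) c i *: s`_i.

Definition is_lie (V : lmodType K) (br : V -> V -> V) : Prop :=
  bilin br /\ (forall x, br x x = 0) /\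
  (forall x y z, br x (br y z) + br y (br z x) + br z (br x y) = 0).

Definition perfect (V : lmodType K) (br : V -> V -> V) : Prop :=
  forall x : V, exists s : seq (V * V), x = \sum_(p <- s) br p.1 p.2.

Definition invariant_form (V : lmodType K) (br : V -> V -> V) (f : V -> V -> K) :=
  forall x y w, f (br x y) w = f x (br y w).

Definition is_derivation (A : comAlgType K) (d : A -> A) : Prop :=
  lin d /\ forall a b : A, d (a * b) = d a * b + a * d b.

(* D (with bracket brD) is a Lie subalgebra of Der(A): rho identifies D
   injectively and linearly with a space of derivations of A, the bracket of D
   being the commutator of derivations. *)
Definition lie_subalg_Der (A : comAlgType K) (D : lmodType K)
    (brD : D -> D -> D) (rho : D -> A -> A) : Prop :=
  (forall (c : K) (d e : D) (a : A), rho (c *: d + e) a = c *: rho d a + rho e a) /\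
  injective rho /\
  (forall d, is_derivation (rho d)) /\
  (forall d e a, rho (brD d e) a = rho d (rho e a) - rho e (rho d a)).

Definition HC1 (A : comAlgType K) (al : A -> A -> K) : Prop :=
  bilinK al /\ (forall a b, al a b = - al b a) /\
  (forall a b c, al (a * b) c + al (c * a) b + al (b * c) a = 0).

Definition Z2comm (V : lmodType K) (br : V -> V -> V) (phi : V -> V -> K) : Prop :=
  bilinK phi /\ (forall x y, phi x y = phi y x) /\
  (forall x y z, phi (br x y) z + phi (br z x) y + phi (br y z) x = 0).

Definition is_tensor (L A T : lmodType K) (tens : L -> A -> T) : Prop :=
  bilin tens /\
  forall (W : lmodType K) (f : L -> A -> W), bilin f ->
    exists! g : T -> W, lin g /\ forall x a, g (tens x a) = f x a.

Definition subspace_iso (V W : Type) (P : (V -> V -> K) -> Prop)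
    (Q : (W -> W -> K) -> Prop) : Prop :=
  exists F : (V -> V -> K) -> (W -> W -> K),
    (forall phi, P phi -> Q (F phi)) /\
    (forall c phi psi, P phi -> P psi ->
       F (fun u v => c * phi u v + psi u v) = (fun u v => c * F phi u v + F psi u v)) /\
    (forall phi psi, P phi -> P psi -> F phi = F psi -> phi = psi) /\
    (forall chi, Q chi -> exists2 phi, P phi & F phi = chi).

(* The bracket on (L (x) A) + Kz + D, with elements written ((t, c), d),
   z = ((0,1),0). *)
Definition ext_bracket (L : lmodType K) (A : comAlgType K) (D T : lmodType K)
    (brL : L -> L -> L) (form : L -> L -> K) (xi : A -> A -> K)
    (brD : D -> D -> D) (rho : D -> A -> A) (tens : L -> A -> T)
    (br : (T * K^o * D)%type -> (T * K^o * D)%type -> (T * K^o * D)%type) : Prop :=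
  bilin br /\
  (forall x y a b, br ((tens x a, 0), 0) ((tens y b, 0), 0)
                   = ((tens (brL x y) (a * b), form x y * xi a b), 0)) /\
  (forall d x a, br ((0, 0), d) ((tens x a, 0), 0) = ((tens x (rho d a), 0), 0)) /\
  (forall d x a, br ((tens x a, 0), 0) ((0, 0), d) = - ((tens x (rho d a), 0), 0)) /\
  (forall d e, br ((0, 0), d) ((0, 0), e) = ((0, 0), brD d e)) /\
  (forall g, br ((0, 1), 0) g = 0 /\ br g ((0, 1), 0) = 0).

Definition plain_bracket (L : lmodType K) (A : comAlgType K) (D T : lmodType K)
    (brL : L -> L -> L) (brD : D -> D -> D) (rho : D -> A -> A)
    (tens : L -> A -> T) (br : (T * D)%type -> (T * D)%type -> (T * D)%type) : Prop :=
  bilin br /\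
  (forall x y a b, br (tens x a, 0) (tens y b, 0) = (tens (brL x y) (a * b), 0)) /\
  (forall d x a, br (0, d) (tens x a, 0) = (tens x (rho d a), 0)) /\
  (forall d x a, br (tens x a, 0) (0, d) = - (tens x (rho d a), 0)) /\
  (forall d e, br (0, d) (0, e) = (0, brD d e)).

End Defs.

(* Main.v *)
Require Import Defs.
From HB Require Import structures.
From mathcomp Require Import all_boot all_order all_algebra.
From mathcomp Require Import ring.
From Stdlib Require Import FunctionalExtensionality.
Import GRing.Theory.
Local Open Scope ring_scope.
Set Implicit Arguments. Unset Strict Implicit. Unset Printing Implicit Defensive.

Section LinFacts.
Variable K : fieldType.

Lemma linD (V W : lmodType K) (f : V -> W) : lin f -> forall u v, f (u + v) = f u + f v.
Proof. by move=> h u v; rewrite -[u in LHS]scale1r h scale1r. Qed.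

Lemma lin0 (V W : lmodType K) (f : V -> W) : lin f -> f 0 = 0.
Proof. by move=> h; apply: (addrI (f 0)); rewrite addr0 -linD // addr0. Qed.

Lemma linZ (V W : lmodType K) (f : V -> W) : lin f -> forall c u, f (c *: u) = c *: f u.
Proof. by move=> h c u; rewrite -[c *: u]addr0 h lin0 // addr0. Qed.

Lemma linN (V W : lmodType K) (f : V -> W) : lin f -> forall u, f (- u) = - f u.
Proof. by move=> h u; rewrite -scaleN1r linZ // scaleN1r. Qed.

Lemma linB (V W : lmodType K) (f : V -> W) : lin f -> forall u v, f (u - v) = f u - f v.
Proof. by move=> h u v; rewrite linD // linN. Qed.

Lemma lin_sum (V W : lmodType K) (f : V -> W) (I : Type) (s : seq I) (F : I -> V) :
  lin f -> f (\sum_(p <- s) F p) = \sum_(p <- s) f (F p).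
Proof.
move=> h; elim: s => [|p s IH]; first by rewrite !big_nil lin0.
by rewrite !big_cons linD // IH.
Qed.

Lemma lin_comp (U V W : lmodType K) (f : V -> W) (g : U -> V) :
  lin f -> lin g -> lin (fun u => f (g u)).
Proof. by move=> hf hg c u v; rewrite hg hf. Qed.

Lemma linKl (V : lmodType K) (f : V -> K) : linK f -> lin (f : V -> K^o).
Proof. by move=> h c u v; rewrite h. Qed.

End LinFacts.

Section PLemma.
Variable K : fieldType.
Variables (L : lmodType K) (brL : L -> L -> L).
Hypothesis hL : is_lie brL.
Hypothesis hperf : perfect brL.
Hypothesis h2 : (2%:R : K) != 0.

Lemma brL_l y : lin (fun x => brL x y). Proof. by case: hL => [[_ ?] _]. Qed.
Lemma brL_r x : lin (brL x). Proof. by case: hL => [[? _] _]. Qed.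

Lemma brL_anti x y : brL x y = - brL y x.
Proof.
have h := (proj1 (proj2 hL)) (x + y).
rewrite (linD (brL_l _)) (linD (brL_r _)) (linD (brL_r _)) !(proj1 (proj2 hL)) add0r addr0 in h.
by apply/eqP; rewrite -subr_eq0 opprK; apply/eqP.
Qed.

Lemma brL_jac w u x : brL (brL w u) x = brL w (brL u x) - brL u (brL w x).
Proof.
have h := (proj2 (proj2 hL)) x w u.
rewrite (brL_anti x w) (linN (brL_r u)) in h.
rewrite (brL_anti (brL w u) x).
by move/eqP: h; rewrite -addrA addr_eq0 => /eqP ->; rewrite opprK.
Qed.

Lemma p_zero (p : L -> L -> K) :
  (forall y, linK (p^~ y)) -> (forall x, linK (p x)) ->
  (forall w x y, p (brL w x) y = p x (brL w y)) -> forall x y, p x y = 0.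
Proof.
move=> pl pr hp.
have s1 : forall x w u y, p x (brL (brL w u) y) = 0.
  move=> x w u y.
  have e1 : p (brL (brL w u) x) y = p x (brL (brL w u) y) by rewrite hp.
  have e2 : p (brL (brL w u) x) y = - p x (brL (brL w u) y).
    rewrite brL_jac (linB (linKl (pl _))) hp hp hp hp.
    rewrite -(linB (linKl (pr _))) (brL_jac w u y).
    by rewrite -(linN (linKl (pr _))) opprB.
  have : 2%:R * p x (brL (brL w u) y) = 0.
    by rewrite mulr2n mulrDl mul1r -{1}e1 e2 addNr.
  by move/eqP; rewrite mulf_eq0 (negbTE h2) /= => /eqP.
have s2 : forall x v y, p x (brL v y) = 0.
  move=> x v y; have [s ->] := hperf v.
  rewrite (lin_sum _ _ (brL_l y)) (lin_sum _ _ (linKl (pr x))).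
  by rewrite big1 // => q _; apply: s1.
move=> x y; have [s ->] := hperf y.
by rewrite (lin_sum _ _ (linKl (pr x))) big1 // => q _; apply: s2.
Qed.
End PLemma.

Section Main.
Variable K : fieldType.
Hypothesis hchar2 : 2%N \notin [pchar K].
Hypothesis hchar3 : 3%N \notin [pchar K].
Variables (L : lmodType K) (brL : L -> L -> L).
Hypothesis hL : is_lie brL.
Hypothesis hperf : perfect brL.
Variable A : comAlgType K.
Variables (D : lmodType K) (brD : D -> D -> D) (rho : D -> A -> A).
Hypothesis hD : lie_subalg_Der brD rho.
Variable form : L -> L -> K.
Hypothesis hform_bil : bilinK form.
Hypothesis hform_sym : forall x y, form x y = form y x.
Hypothesis hform_inv : invariant_form brL form.
Hypothesis hform0 : exists x y, form x y != 0.
Variable xi : A -> A -> K.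
Hypothesis hxi : HC1 xi.
Hypothesis hxi0 : exists a b, xi a b != 0.
Variables (T : lmodType K) (tens : L -> A -> T).
Hypothesis hT : is_tensor tens.
Variable br1 : (T * K^o * D)%type -> (T * K^o * D)%type -> (T * K^o * D)%type.
Hypothesis hbr1 : ext_bracket brL form xi brD rho tens br1.
Variable br2 : (T * D)%type -> (T * D)%type -> (T * D)%type.
Hypothesis hbr2 : plain_bracket brL brD rho tens br2.

Local Notation G1 := (T * K^o * D)%type.
Local Notation G2 := (T * D)%type.

Lemma two_neq0 : (2%:R : K) != 0.
Proof. by rewrite natf_neq0_pchar pnatE // inE. Qed.
Lemma three_neq0 : (3%:R : K) != 0.
Proof. by rewrite natf_neq0_pchar pnatE // inE. Qed.

Lemma tens_l a : lin (fun x => tens x a). Proof. by case: hT => [[_ ?] _]. Qed.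
Lemma tens_r x : lin (tens x). Proof. by case: hT => [[? _] _]. Qed.

Lemma tens_ext (W : lmodType K) (g1 g2 : T -> W) : lin g1 -> lin g2 ->
  (forall x a, g1 (tens x a) = g2 (tens x a)) -> forall t, g1 t = g2 t.
Proof.
move=> h1 h2 e t.
have fb : bilin (fun x a => g1 (tens x a)).
  split=> [x|a]; first exact: (lin_comp h1 (tens_r x)).
  exact: (lin_comp h1 (tens_l a)).
have [g [_ U]] := (proj2 hT) W _ fb.
have <- := U g1 (conj h1 (fun x a => erefl)).
by have <- := U g2 (conj h2 (fun x a => esym (e x a))).
Qed.

Lemma tens_perf (W : lmodType K) (g : T -> W) : lin g ->
  (forall x y a, g (tens (brL x y) a) = 0) -> forall x a, g (tens x a) = 0.
Proof.
move=> hg h x a; have [s ->] := hperf x.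
rewrite (lin_sum _ _ (lin_comp hg (tens_l a))).
by rewrite big1 // => q _; apply: h.
Qed.

Lemma xi_a1 a : xi a 1 = 0.
Proof.
case: hxi => _ [hs hc]; have := hc a 1 1.
by rewrite !mulr1 mul1r (hs 1 a) addrK.
Qed.

Lemma rho1 d : rho d 1 = 0.
Proof.
case: hD => _ [_ [hd _]]; have [_ hl] := hd d; have := hl 1 1.
rewrite !mulr1 mul1r => h.
by apply: (addrI (rho d 1)); rewrite addr0 -h.
Qed.


Definition Xt (t : T) : G1 := ((t, 0), 0).
Definition dd (d : D) : G1 := ((0, 0), d).
Definition zz : G1 := ((0, 1), 0).
Definition emb (g : G2) : G1 := ((g.1, 0), g.2).
Definition prj (u : G1) : G2 := (u.1.1, u.2).

Lemma scK (c : K) : (c *: (1 : K^o)) = c. Proof. exact: mulr1. Qed.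

Ltac peq := repeat (apply: injective_projections => /=).

Lemma lin_Xt : lin Xt.
Proof. move=> c u v; rewrite /Xt. peq. all: rewrite ?scaler0 ?mulr0 ?addr0 //. Qed.
Lemma lin_dd : lin dd.
Proof. move=> c u v; rewrite /dd. peq. all: rewrite ?scaler0 ?mulr0 ?addr0 //. Qed.
Lemma lin_emb : lin emb.
Proof. move=> c u v; rewrite /emb. peq. all: rewrite ?scaler0 ?mulr0 ?addr0 //. Qed.
Lemma lin_prj : lin prj.
Proof. move=> c u v; rewrite /prj. peq. all: done. Qed.

Lemma decomp (u : G1) : u = Xt u.1.1 + u.1.2 *: zz + dd u.2.
Proof. case: u => [[t c] d]; rewrite /Xt /zz /dd. peq. all: rewrite ?scaler0 ?mulr0 ?mulr1 ?scK ?addr0 ?add0r //. Qed.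

Lemma emb_dec (g : G2) : emb g = Xt g.1 + dd g.2.
Proof. case: g => t d; rewrite /emb /Xt /dd. peq. all: rewrite ?addr0 ?add0r //. Qed.

Lemma g2_dec (g : G2) : g = (g.1, 0) + (0, g.2).
Proof. case: g => t d. peq. all: rewrite ?addr0 ?add0r //. Qed.

Lemma prj_emb g : prj (emb g) = g.
Proof. by case: g. Qed.

Lemma b1l v : lin (fun u => br1 u v). Proof. by case: hbr1 => [[_ ?] _]. Qed.
Lemma b1r u : lin (br1 u). Proof. by case: hbr1 => [[? _] _]. Qed.
Lemma b2l v : lin (fun u => br2 u v). Proof. by case: hbr2 => [[_ ?] _]. Qed.
Lemma b2r u : lin (br2 u). Proof. by case: hbr2 => [[? _] _]. Qed.

Lemma br1_z g : br1 zz g = 0. Proof. by case: hbr1 => _ [_ [_ [_ [_ h]]]]; case: (h g). Qed.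
Lemma br1_z' g : br1 g zz = 0. Proof. by case: hbr1 => _ [_ [_ [_ [_ h]]]]; case: (h g). Qed.

Lemma br_XX x a y b : br1 (Xt (tens x a)) (Xt (tens y b)) =
  Xt (tens (brL x y) (a * b)) + (form x y * xi a b) *: zz.
Proof.
case: hbr1 => _ [h _]; rewrite /Xt h /zz.
peq. all: rewrite ?scaler0 ?mulr0 ?mulr1 ?scK ?addr0 ?add0r //.
Qed.

Lemma br_dX d x a : br1 (dd d) (Xt (tens x a)) = Xt (tens x (rho d a)).
Proof. by case: hbr1 => _ [_ [h _]]; rewrite /Xt /dd h. Qed.
Lemma br_Xd d x a : br1 (Xt (tens x a)) (dd d) = - Xt (tens x (rho d a)).
Proof. by case: hbr1 => _ [_ [_ [h _]]]; rewrite /Xt /dd h. Qed.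
Lemma br_dd d e : br1 (dd d) (dd e) = dd (brD d e).
Proof. by case: hbr1 => _ [_ [_ [_ [h _]]]]; rewrite /dd h. Qed.

Lemma lin_zero (V W : lmodType K) : lin (fun _ : V => (0 : W)).
Proof. by move=> c u v; rewrite scaler0 addr0. Qed.

Lemma scKr (c x : K) : (c *: (x : K^o)) = c * x. Proof. by []. Qed.

Lemma lin_inl : lin ((fun t : T => (t, 0)) : T -> G2).
Proof. move=> c u v. peq. all: by rewrite ?scaler0 ?addr0. Qed.
Lemma lin_inr : lin ((fun d : D => (0, d)) : D -> G2).
Proof. move=> c u v. peq. all: by rewrite ?scaler0 ?addr0. Qed.

Lemma prj_Xz (s : T) (c : K) : prj (Xt s + c *: zz) = (s, 0).
Proof. rewrite /prj /Xt /zz. peq. all: by rewrite ?scaler0 ?addr0. Qed.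

Lemma C_XX t t' : prj (br1 (Xt t) (Xt t')) = br2 (t, 0) (t', 0).
Proof.
have sa : forall t y b, prj (br1 (Xt t) (Xt (tens y b))) = br2 (t, 0) (tens y b, 0).
  move=> {}t y b.
  apply: (tens_ext (lin_comp lin_prj (lin_comp (b1l _) lin_Xt))
                   (lin_comp (b2l _) lin_inl)) => x a /=.
  by rewrite br_XX prj_Xz; case: hbr2 => _ [-> _].
apply: (tens_ext (lin_comp lin_prj (lin_comp (b1r _) lin_Xt))
                 (lin_comp (b2r _) lin_inl)) => y b /=.
exact: sa.
Qed.

Lemma C_Xd t e : prj (br1 (Xt t) (dd e)) = br2 (t, 0) (0, e).
Proof.
apply: (tens_ext (lin_comp lin_prj (lin_comp (b1l _) lin_Xt))
                 (lin_comp (b2l _) lin_inl)) => x a /=.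
by rewrite br_Xd (linN lin_prj); case: hbr2 => _ [_ [_ [-> _]]].
Qed.

Lemma C_dX d t : prj (br1 (dd d) (Xt t)) = br2 (0, d) (t, 0).
Proof.
apply: (tens_ext (lin_comp lin_prj (lin_comp (b1r _) lin_Xt))
                 (lin_comp (b2r _) lin_inl)) => x a /=.
by rewrite br_dX; case: hbr2 => _ [_ [-> _]].
Qed.

Lemma C_dd d e : prj (br1 (dd d) (dd e)) = br2 (0, d) (0, e).
Proof. by rewrite br_dd; case: hbr2 => _ [_ [_ [_ ->]]]. Qed.

Lemma claimC g h : prj (br1 (emb g) (emb h)) = br2 g h.
Proof.
rewrite [in RHS](g2_dec g) [in RHS](g2_dec h) !emb_dec.
rewrite (linD (b2l _)) !(linD (b2r _)).
rewrite (linD (b1l _)) !(linD (b1r _)) !(linD lin_prj).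
by rewrite C_XX C_Xd C_dX C_dd.
Qed.

Lemma dec2 (u : G1) : u = emb (prj u) + u.1.2 *: zz.
Proof. case: u => [[t c] d]; rewrite /emb /prj /zz. peq. all: by rewrite ?scaler0 ?addr0 ?add0r ?scK. Qed.

Lemma br1_prj u v : br1 u v = br1 (emb (prj u)) (emb (prj v)).
Proof.
rewrite {1}(dec2 u) (linD (b1l v)) (linZ (b1l v)) br1_z scaler0 addr0.
by rewrite {1}(dec2 v) (linD (b1r _)) (linZ (b1r _)) br1_z' scaler0 addr0.
Qed.

Lemma claimC' u v : prj (br1 u v) = br2 (prj u) (prj v).
Proof. by rewrite br1_prj claimC. Qed.

Section Phi.
Variable phi : G1 -> G1 -> K.
Hypothesis hphi : Z2comm br1 phi.

Lemma pl v : lin ((fun u => phi u v) : G1 -> K^o). Proof. by apply: linKl; case: hphi => [[_ ?] _]. Qed.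
Lemma pr u : lin ((phi u) : G1 -> K^o). Proof. by apply: linKl; case: hphi => [[? _] _]. Qed.
Lemma psym u v : phi u v = phi v u. Proof. by case: hphi => _ [h _]. Qed.
Lemma pcoc u v w : phi (br1 u v) w + phi (br1 w u) v + phi (br1 v w) u = 0.
Proof. by case: hphi => _ [_ h]. Qed.

Lemma p0l v : phi 0 v = 0. Proof. exact: (lin0 (pl v)). Qed.
Lemma p0r u : phi u 0 = 0. Proof. exact: (lin0 (pr u)). Qed.

Lemma phi_Xz t : phi (Xt t) zz = 0.
Proof.
have lg : lin ((fun t => phi (Xt t) zz) : T -> K^o) := lin_comp (pl zz) lin_Xt.
apply: (tens_ext lg (@lin_zero T K^o)) => x a /=.
apply: (tens_perf lg) => {x a} x y a.
have := pcoc (Xt (tens x a)) (Xt (tens y 1)) zz.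
by rewrite br1_z br1_z' !p0l !addr0 br_XX xi_a1 mulr0 scale0r addr0 mulr1.
Qed.

Lemma phi_zX t : phi zz (Xt t) = 0. Proof. by rewrite psym phi_Xz. Qed.

Lemma phi_zz : phi zz zz = 0.
Proof.
have [x0 [y0 hf]] := hform0; have [a0 [b0 hx]] := hxi0.
have := pcoc (Xt (tens x0 a0)) (Xt (tens y0 b0)) zz.
rewrite br1_z br1_z' !p0l !addr0 br_XX (linD (pl zz)) (linZ (pl zz)) phi_Xz add0r scKr.
by move/eqP; rewrite !mulf_eq0 (negbTE hf) (negbTE hx) /= => /eqP.
Qed.

Definition M x a y b := phi (Xt (tens x a)) (Xt (tens y b)).

Lemma phi_brXX x a y b v : phi (br1 (Xt (tens x a)) (Xt (tens y b))) v =
  phi (Xt (tens (brL x y) (a * b))) v + (form x y * xi a b) * phi zz v.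
Proof. by rewrite br_XX (linD (pl v)) (linZ (pl v)). Qed.

Lemma cocXXX x a y b w c :
  M (brL x y) (a * b) w c + M (brL w x) (c * a) y b + M (brL y w) (b * c) x a = 0.
Proof. by have := pcoc (Xt (tens x a)) (Xt (tens y b)) (Xt (tens w c)); rewrite !phi_brXX !phi_zX !mulr0 !addr0. Qed.

Lemma M_l a y b : lin ((fun x => M x a y b) : L -> K^o).
Proof. exact: (lin_comp (pl _) (lin_comp lin_Xt (tens_l a))). Qed.
Lemma M_r x a b : lin ((fun y => M x a y b) : L -> K^o).
Proof. exact: (lin_comp (pr _) (lin_comp lin_Xt (tens_l b))). Qed.
Lemma M_a x y b : lin ((fun a => M x a y b) : A -> K^o).
Proof. exact: (lin_comp (pl _) (lin_comp lin_Xt (tens_r x))). Qed.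
Lemma Msym x a y b : M x a y b = M y b x a. Proof. exact: psym. Qed.

Lemma linK_sub (V : lmodType K) (f g : V -> K^o) : lin f -> lin g -> linK (fun v => f v - g v).
Proof. move=> hf hg c u v; rewrite hf hg /=; rewrite !scKr; ring. Qed.

Lemma P0 x a y b : M x a y b = M x (a * b) y 1.
Proof.
pose p := fun x y => M x a y b - M x (a * b) y 1.
suff : forall x y, p x y = 0 by move=> /(_ x y) /eqP; rewrite subr_eq0 => /eqP.
apply: (p_zero hL hperf two_neq0).
- by move=> y0; apply: linK_sub; [exact: M_l | exact: M_l].
- by move=> x0; apply: linK_sub; [exact: M_r | exact: M_r].
move=> w x0 y0; rewrite /p.
have h1 := cocXXX x0 a y0 b w 1.
have h2 := cocXXX x0 (a * b) y0 1 w 1.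
rewrite !mulr1 !mul1r in h1 h2.
rewrite (Msym (brL y0 w)) (Msym (brL y0 w)) (brL_anti hL y0 w) in h1 h2.
rewrite !(linN (M_r _ _ _)) in h1 h2.
rewrite -[LHS]subr0 -[X in _ - X](subrr (M (brL x0 y0) (a * b) w 1)).
apply/eqP; rewrite -subr_eq0; apply/eqP.
have -> : forall E P Q R S : K, P - Q - (E - E) - (R - S) = (E + P + - R) - (E + Q + - S) by move=> *; ring.
by rewrite h1 h2 subrr.
Qed.

Lemma Nsym x c y : M x c y 1 = M y c x 1.
Proof. by rewrite Msym P0 mul1r. Qed.

Lemma Ncoc c x y w : M (brL x y) c w 1 + M (brL w x) c y 1 + M (brL y w) c x 1 = 0.
Proof. by have := cocXXX x c y 1 w 1; rewrite !mulr1 !mul1r (P0 (brL y w) 1 x c) mul1r. Qed.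

Lemma Mzero x y b : M y 0 x b = 0.
Proof. by rewrite /M (lin0 (tens_r y)) (lin0 lin_Xt) p0l. Qed.

Lemma lam0 d : phi zz (dd d) = 0.
Proof.
set lam := phi zz (dd d).
have E1 : forall x a y b, phi (Xt (tens (brL x y) (a * b))) (dd d) + form x y * xi a b * lam
    + M x (rho d a) y b - M y (rho d b) x a = 0.
  move=> x a y b; have := pcoc (Xt (tens x a)) (Xt (tens y b)) (dd d).
  by rewrite phi_brXX br_dX br_Xd (linN (pl _)).
have E2 : forall x y a, phi (Xt (tens (brL x y) a)) (dd d) = - M x (rho d a) y 1.
  move=> x y a; have := E1 x a y 1.
  rewrite mulr1 xi_a1 mulr0 mul0r addr0 rho1 Mzero subr0 => /eqP.
  by rewrite addr_eq0 => /eqP.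
have Leib : forall a b, rho d (a * b) = rho d a * b + a * rho d b.
  by case: hD => _ [_ [hd _]] a b; case: (hd d) => _ ->.
have E3 : forall x y a b, form x y * xi a b * lam = M x (a * rho d b) y 1 + M x (a * rho d b) y 1.
  move=> x y a b; have := E1 x a y b.
  rewrite E2 Leib (linD (M_a _ _ _)) (P0 x (rho d a) y b) (Msym y) (P0 x a) => h.
  apply/eqP; rewrite -subr_eq0 -h; apply/eqP; ring.
have [a0 [b0 hx]] := hxi0.
set c := a0 * rho d b0.
have E4 : forall x y w, form (brL x y) w * xi a0 b0 * lam = 0.
  move=> x y w.
  have h := Ncoc c x y w.
  have h3 : (3%:R : K) * (form (brL x y) w * xi a0 b0 * lam) = 0.
    have f1 : form (brL w x) y = form (brL x y) w by rewrite hform_inv hform_sym.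
    have f2 : form (brL y w) x = form (brL x y) w by rewrite hform_inv hform_sym hform_inv.
    have eA := E3 (brL x y) w a0 b0.
    have eB := E3 (brL w x) y a0 b0.
    have eC := E3 (brL y w) x a0 b0.
    rewrite f1 in eB; rewrite f2 in eC.
    have -> : forall F : K, 3%:R * F = F + F + F by move=> *; ring.
    rewrite {1}eA {1}eB eC.
    by rewrite -[RHS](mulr0 2%:R) -h; ring.
  by move/eqP: h3; rewrite mulf_eq0 (negbTE three_neq0) /= => /eqP.
have [x0 [y0 hf]] := hform0.
have E5 : form x0 y0 * xi a0 b0 * lam = 0.
  have [s ->] := hperf x0.
  have lf : lin ((fun x => form x y0) : L -> K^o) by apply: linKl; case: hform_bil.
  by rewrite (lin_sum _ _ lf) !mulr_suml big1.
by move/eqP: E5; rewrite !mulf_eq0 (negbTE hf) (negbTE hx) /= => /eqP.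
Qed.

Lemma phi_z w : phi zz w = 0.
Proof.
rewrite (decomp w) !(linD (pr zz)) (linZ (pr zz)) phi_zX phi_zz lam0.
by rewrite scaler0 !addr0.
Qed.

Lemma phi_dropz u v : phi u v = phi (emb (prj u)) (emb (prj v)).
Proof.
rewrite {1}(dec2 u) (linD (pl v)) (linZ (pl v)) phi_z scaler0 addr0.
by rewrite {1}(dec2 v) (linD (pr _)) (linZ (pr _)) (psym (emb (prj u)) zz) phi_z scaler0 addr0.
Qed.

End Phi.

Lemma main_iso : subspace_iso (Z2comm br1) (Z2comm br2).
Proof.
exists (fun phi g h => phi (emb g) (emb h)); split; [|split; [|split]].
- move=> phi hphi; split; [split|split].
  + by move=> g; apply: (lin_comp (pr hphi _) lin_emb).
  + by move=> h; apply: (lin_comp (pl hphi _) lin_emb).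
  + by move=> g h; apply: psym.
  + move=> g h k.
    have e : forall U v, phi U (emb v) = phi (emb (prj U)) (emb v).
      by move=> U v; rewrite (phi_dropz hphi) prj_emb.
    rewrite -!claimC -!e; exact: pcoc.
- by [].
- move=> phi psi hphi hpsi e.
  apply: functional_extensionality => u; apply: functional_extensionality => v.
  rewrite (phi_dropz hphi) (phi_dropz hpsi).
  by have := congr1 (fun F => F (prj u) (prj v)) e.
- move=> chi hchi.
  have [[cl cr] [cs cc]] := hchi.
  exists (fun u v => chi (prj u) (prj v)).
    split; [split|split].
    + by move=> u c v w; rewrite (linD lin_prj) (linZ lin_prj) cl.
    + by move=> v c u w; rewrite (linD lin_prj) (linZ lin_prj) cr.
    + by move=> u v; apply: cs.
    + by move=> u v w; rewrite !claimC'; apply: cc.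
  apply: functional_extensionality => g; apply: functional_extensionality => h.
  by rewrite !prj_emb.
Qed.

End Main.

Theorem lemma5p4 (K : fieldType)
  (hchar2 : 2%N \notin [pchar K]) (hchar3 : 3%N \notin [pchar K])
  (L : lmodType K) (brL : L -> L -> L) (hL : is_lie brL) (hperf : perfect brL)
  (A : comAlgType K) (hfin : fin_dim L \/ fin_dim A)
  (D : lmodType K) (brD : D -> D -> D) (rho : D -> A -> A)
  (hD : lie_subalg_Der brD rho)
  (form : L -> L -> K) (hform_bil : bilinK form)
  (hform_sym : forall x y, form x y = form y x)
  (hform_inv : invariant_form brL form) (hform0 : exists x y, form x y != 0)
  (xi : A -> A -> K) (hxi : HC1 xi) (hxi0 : exists a b, xi a b != 0)
  (T : lmodType K) (tens : L -> A -> T) (hT : is_tensor tens)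
  (br1 : (T * K^o * D)%type -> (T * K^o * D)%type -> (T * K^o * D)%type)
  (hbr1 : ext_bracket brL form xi brD rho tens br1) (hbr1_lie : is_lie br1)
  (br2 : (T * D)%type -> (T * D)%type -> (T * D)%type)
  (hbr2 : plain_bracket brL brD rho tens br2) :
  subspace_iso (Z2comm br1) (Z2comm br2).
Proof.
exact: (main_iso hchar2 hchar3 hL hperf hD hform_bil hform_sym hform_inv hform0 hxi hxi0 hT hbr1 hbr2).
Qed.
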